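(* Let $(L,\vee,\wedge,0,1)$ be a complemented modular lattice with $0\ne1$ and $a,b\in L$. Then: (i) $\{a\}\wedge(a\to b)=\{a\wedge b\}$ (and $a\wedge b\le b$); (ii) if $a^+\le b^+$ then $(a\to b)\wedge b^+=a^+$; (iii) if $c\in a\to b$ then $a\to c=a\to b$; (iv) $a\to(a\to b)=a\to b$; (v) if $a^+\le \{b\}$ then $a\to b=\{b\}$.
   Context: For $a\in L$, $a^+:=\{x\in L\mid a\vee x=1,\ a\wedge x=0\}$ (the set of all complements of $a$). For $A,B\subseteq L$: $A\vee B:=\{x\vee y\mid x\in A,y\in B\}$, $A\wedge B:=\{x\wedge y\mid x\in A,y\in B\}$, and $A\le B$ means $x\le y$ for all $x\in A$ and all $y\in B$. For $a,b\in L$, $a\to b:=a^+\vee\{a\wedge b\}$, and for $A\subseteq L$, $a\to A:=\{a\}^+\vee(\{a\}\wedge A)=\{x\vee(a\wedge y)\mid x\in a^+,y\in A\}$. *)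

(* Defs.v *)
From HB Require Import structures.
From mathcomp Require Import all_boot all_order.
Set Implicit Arguments. Unset Strict Implicit. Unset Printing Implicit Defensive.
Import Order.TTheory.
Local Open Scope order_scope.

(* Subsets of a lattice are represented as predicates L -> Prop;
   set equality is Leibniz equality of predicates. *)
Section LatticeSets.
Context {d : Order.disp_t} {L : tbLatticeType d}.

Definition modular_lattice : Prop :=
  forall x y z : L, x <= z -> x `|` (y `&` z) = (x `|` y) `&` z.

Definition complemented_lattice : Prop :=
  forall x : L, exists y : L, x `|` y = \top /\ x `&` y = \bot.

Definition compls (a : L) : L -> Prop :=
  fun x => a `|` x = \top /\ a `&` x = \bot.

Definition sing (a : L) : L -> Prop := fun x => x = a.

Definition setJoin (A B : L -> Prop) : L -> Prop :=
  fun z => exists x y, A x /\ B y /\ z = x `|` y.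

Definition setMeet (A B : L -> Prop) : L -> Prop :=
  fun z => exists x y, A x /\ B y /\ z = x `&` y.

Definition setLe (A B : L -> Prop) : Prop :=
  forall x y, A x -> B y -> x <= y.

Definition imp (a b : L) : L -> Prop := setJoin (compls a) (sing (a `&` b)).

(* a -> A := a^+ \/ ({a} /\ A) *)
Definition impS (a : L) (A : L -> Prop) : L -> Prop :=
  setJoin (compls a) (setMeet (sing a) A).

End LatticeSets.

(* Main.v *)
Require Import Defs.
From HB Require Import structures.
From mathcomp Require Import all_boot all_order.
From Stdlib Require Import FunctionalExtensionality PropExtensionality.
Import Order.TTheory.
Local Open Scope order_scope.

Lemma pext {T} (P Q : T -> Prop) : (forall z, P z <-> Q z) -> P = Q.
Proof.
move=> H; apply: functional_extensionality => z; apply: propositional_extensionality; exact: H.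
Qed.

Lemma meet_imp (d : Order.disp_t) (L : tbLatticeType d)
  (hmod : modular_lattice (L := L)) (a b x : L) :
  compls a x -> a `&` (x `|` (a `&` b)) = a `&` b.
Proof.
case=> _ hx.
have := hmod (a `&` b) x a (leIl _ _).
rewrite (meetC x a) hx joinx0 => E.
by rewrite [RHS]E meetC joinC.
Qed.

Theorem theorem4 (d : Order.disp_t) (L : tbLatticeType d)
  (hmod : modular_lattice (L := L)) (hcompl : complemented_lattice (L := L))
  (hnt : (\bot : L) != \top) (a b : L) :
  [/\ setMeet (sing a) (imp a b) = sing (a `&` b) /\ a `&` b <= b,
      setLe (compls a) (compls b) -> setMeet (imp a b) (compls b) = compls a,
      (forall c : L, imp a b c -> imp a c = imp a b),
      impS a (imp a b) = imp a b
    & setLe (compls a) (sing b) -> imp a b = sing b].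
Proof.
have [xa hxa] := hcompl a.
have [yb hyb] := hcompl b.
have ca : compls a xa by [].
have cb : compls b yb by [].
have Hi : forall y, imp a b y -> a `&` y = a `&` b.
  move=> y [x [u [hx [hu ->]]]]; rewrite hu; exact: meet_imp.
split.
- split; last exact: leIr.
  apply: pext => z; split.
  + by move=> [u [y [hu [hy ->]]]]; rewrite hu; apply: Hi.
  + move=> ->; exists a, (xa `|` (a `&` b)); split; first by [].
    split; first by exists xa, (a `&` b).
    by rewrite meet_imp.
- move=> hle; apply: pext => z; split.
  + move=> [u [y [[x [v [hx [hv ->]]]] [hy ->]]]].
    rewrite hv -(hmod _ _ _ (hle _ _ hx hy)).
    have -> : a `&` b `&` y = \bot.
      apply/le_anti; rewrite le0x andbT; case: hy => _ <-.
      by rewrite lexI leIr andbT (le_trans (leIl _ _) (leIr _ _)).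
    by rewrite joinx0.
  + move=> hz; exists (z `|` (a `&` b)), yb; split; first by exists z, (a `&` b).
    split; first by [].
    rewrite -(hmod _ _ _ (hle _ _ hz cb)).
    have -> : a `&` b `&` yb = \bot.
      apply/le_anti; rewrite le0x andbT; case: cb => _ <-.
      by rewrite lexI leIr andbT (le_trans (leIl _ _) (leIr _ _)).
    by rewrite joinx0.
- move=> c hc; rewrite /imp (Hi _ hc) //.
- apply: pext => z; split.
  + move=> [x [w [hx [[u [y [hu [hy hw]]]] ->]]]].
    by exists x, (a `&` b); rewrite hw hu Hi.
  + move=> [x [w [hx [hw ->]]]]; rewrite hw.
    exists x, (a `&` b); split=> //; split=> //.
    exists a, (xa `|` (a `&` b)); split=> //; split; first by exists xa, (a `&` b).
    by rewrite meet_imp.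
- move=> hle; apply: pext => z; split.
  + move=> [x [w [hx [hw ->]]]]; rewrite hw /sing.
    rewrite (hmod _ _ _ (hle _ _ hx (erefl b))).
    by case: hx => h _; rewrite joinC h meet1x.
  + move=> ->; exists xa, (a `&` b); split=> //; split=> //.
    rewrite (hmod _ _ _ (hle _ _ ca (erefl b))).
    by case: ca => h _; rewrite joinC h meet1x.
Qed.
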